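(* Let $f,g$ satisfy (H1) and (H2) (see context). Let $(\gamma_n)_{n\ge1}$ be positive non-increasing stepsizes with $\gamma_n\in(0,1/L]$, $\theta_0\in\mathrm{Dom}(g)$, and let $\theta_{n+1}=\mathrm{Prox}_{\gamma_{n+1}}(\theta_n-\gamma_{n+1}H_{n+1})$ for some $H_{n+1}\in\Theta$, with $\eta_{n+1}=H_{n+1}-\nabla f(\theta_n)$. Let $\mathcal L=\mathrm{argmin}_\Theta F$. (i) For any $\theta_\star\in\mathcal L$ and any $n\ge m\ge0$, $$\|\theta_{n+1}-\theta_\star\|^2\le\|\theta_m-\theta_\star\|^2-2\sum_{k=m}^n\gamma_{k+1}\langle T_{\gamma_{k+1}}(\theta_k)-\theta_\star,\eta_{k+1}\rangle+2\sum_{k=m}^n\gamma_{k+1}^2\|\eta_{k+1}\|^2.$$ (ii) Assume that for any $\theta_\star\in\mathcal L$ the series $\sum_{n\ge0}\gamma_{n+1}\langle T_{\gamma_{n+1}}(\theta_n)-\theta_\star,\eta_{n+1}\rangle$ converges and $\sum_{n\ge0}\gamma_{n+1}^2\|\eta_{n+1}\|^2<\infty$. Then for any $\theta_\star\in\mathcal L$, $\lim_n\|\theta_n-\theta_\star\|$ exists. If in addition $\sum_n\gamma_n=+\infty$, there exists $\theta_\infty\in\mathcal L$ with $\lim_n\theta_n=\theta_\infty$.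
   Context: $\Theta$ is a finite-dimensional Euclidean space with inner product $\langle\cdot,\cdot\rangle$ and norm $\|\cdot\|$. (H1): $g:\Theta\to(-\infty,+\infty]$ convex, not identically $+\infty$, lower semicontinuous; $f:\Theta\to\mathbb R$ continuously differentiable with $L$-Lipschitz gradient. (H2): $f$ convex and $\mathrm{argmin}_\Theta F\neq\emptyset$, $F=f+g$. $\mathrm{Dom}(g)=\{\theta:|g(\theta)|<\infty\}$. $\mathrm{Prox}_\gamma(\theta)=\mathrm{argmin}_{\vartheta}\{g(\vartheta)+\frac1{2\gamma}\|\vartheta-\theta\|^2\}$, $T_\gamma(\theta)=\mathrm{Prox}_\gamma(\theta-\gamma\nabla f(\theta))$. *)

(* Defs.v *)
(* Theta = 'rV[R]_d with the standard Euclidean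
   inner product (every finite-dimensional Euclidean space is isometric to
   such a space). *)
From HB Require Import structures.
From mathcomp Require Import all_boot all_order all_algebra.
From mathcomp Require Import all_classical all_reals all_analysis.
Set Implicit Arguments. Unset Strict Implicit. Unset Printing Implicit Defensive.
Import Order.TTheory GRing.Theory Num.Theory.
Local Open Scope ring_scope.

Section Defs.
Variables (R : realType) (d : nat).
Local Notation V := 'rV[R]_d.

Definition dotp (u v : V) : R := \sum_(i < d) u ord0 i * v ord0 i.
Definition enorm (u : V) : R := Num.sqrt (dotp u u).

Definition is_gradient (f : V -> R) (gradf : V -> V) : Prop :=
  forall x (eps : R), 0 < eps -> exists2 delta : R, 0 < delta &
    forall h : V, enorm h < delta ->
      `|f (x + h) - f x - dotp (gradf x) h| <= eps * enorm h.

Definition lipschitz_with (L : R) (G : V -> V) : Prop :=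
  forall x y, enorm (G x - G y) <= L * enorm (x - y).

Definition convex_real (f : V -> R) : Prop :=
  forall (x y : V) (t : R), 0 < t < 1 ->
    f (t *: x + (1 - t) *: y) <= t * f x + (1 - t) * f y.

Definition no_minfty (g : V -> \bar R) : Prop := forall x, g x != -oo%E.
Definition proper_fun (g : V -> \bar R) : Prop := exists x, g x != +oo%E.
Definition convex_ext (g : V -> \bar R) : Prop :=
  forall (x y : V) (t : R), 0 < t < 1 ->
    (g (t *: x + (1 - t) *: y)%R <= t%:E * g x + (1 - t)%:E * g y)%E.
Definition lsc_ext (g : V -> \bar R) : Prop :=
  forall x (a : R), (a%:E < g x)%E -> exists2 delta : R, 0 < delta &
    forall y, enorm (y - x) < delta -> (a%:E < g y)%E.

Definition dom (g : V -> \bar R) : set V := [set x | g x \is a fin_num].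

Definition Fsum (f : V -> R) (g : V -> \bar R) (x : V) : \bar R :=
  ((f x)%:E + g x)%E.
Definition argmin_set (F : V -> \bar R) : set V :=
  [set x | forall y, (F x <= F y)%E].

Definition is_prox (g : V -> \bar R) (gam : R) (x p : V) : Prop :=
  forall v, (g p + ((enorm (p - x)) ^+ 2 / (2 * gam))%:E
             <= g v + ((enorm (v - x)) ^+ 2 / (2 * gam))%:E)%E.
(* the minimizer (unique and existing under (H1) and gam > 0) *)
Definition prox (g : V -> \bar R) (gam : R) (x : V) : V :=
  xget 0 [set p | is_prox g gam x p].
Definition Tmap (g : V -> \bar R) (gradf : V -> V) (gam : R) (x : V) : V :=
  prox g gam (x - gam *: gradf x).
End Defs.

(* Main.v *)
Require Import Defs.
From HB Require Import structures.
From mathcomp Require Import all_boot all_order all_algebra.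
From mathcomp Require Import all_classical all_reals all_analysis.
From mathcomp Require Import ring lra.
Import Order.TTheory GRing.Theory Num.Theory numFieldTopology.Exports numFieldNormedType.Exports.
Local Open Scope ring_scope.
Local Open Scope classical_set_scope.
Set Implicit Arguments. Unset Strict Implicit. Unset Printing Implicit Defensive.


Section Dot.
Variables (R : realType) (d : nat).
Local Notation V := 'rV[R]_d.
Implicit Types (u v w : V).

Lemma dotpC u v : dotp u v = dotp v u.
Proof. by apply: eq_bigr => i _; rewrite mulrC. Qed.
Lemma dotpDl u v w : dotp (u + v) w = dotp u w + dotp v w.
Proof. by rewrite /dotp -big_split; apply: eq_bigr => i _; rewrite !mxE mulrDl. Qed.
Lemma dotpNl u w : dotp (- u) w = - dotp u w.
Proof. by rewrite /dotp -sumrN; apply: eq_bigr => i _; rewrite !mxE mulNr. Qed.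
Lemma dotpZl a u w : dotp (a *: u) w = a * dotp u w.
Proof. by rewrite /dotp mulr_sumr; apply: eq_bigr => i _; rewrite !mxE mulrA. Qed.
Lemma dotpBl u v w : dotp (u - v) w = dotp u w - dotp v w.
Proof. by rewrite dotpDl dotpNl. Qed.
Lemma dotpDr u v w : dotp w (u + v) = dotp w u + dotp w v.
Proof. by rewrite dotpC dotpDl !(dotpC w). Qed.
Lemma dotpNr u w : dotp w (- u) = - dotp w u.
Proof. by rewrite dotpC dotpNl dotpC. Qed.
Lemma dotpZr a u w : dotp w (a *: u) = a * dotp w u.
Proof. by rewrite dotpC dotpZl dotpC. Qed.
Lemma dotpBr u v w : dotp w (u - v) = dotp w u - dotp w v.
Proof. by rewrite dotpDr dotpNr. Qed.
Lemma dotp0l w : dotp 0 w = 0.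
Proof. by rewrite -(scale0r 0) dotpZl mul0r. Qed.
Lemma dotpp_ge0 u : 0 <= dotp u u.
Proof. by apply: sumr_ge0 => i _; rewrite -expr2 sqr_ge0. Qed.
Lemma enorm_ge0 u : 0 <= enorm u.
Proof. exact: sqrtr_ge0. Qed.
Lemma enorm_sq u : enorm u ^+ 2 = dotp u u.
Proof. by rewrite sqr_sqrtr // dotpp_ge0. Qed.
Lemma enormN u : enorm (- u) = enorm u.
Proof. by rewrite /enorm dotpNl dotpNr opprK. Qed.
Lemma enormB u v : enorm (u - v) = enorm (v - u).
Proof. by rewrite -enormN opprB. Qed.
Lemma enormZ a u : enorm (a *: u) = `|a| * enorm u.
Proof. by rewrite /enorm dotpZl dotpZr mulrA -expr2 sqrtrM ?sqr_ge0 // sqrtr_sqr. Qed.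
Lemma normD2 u v : enorm (u + v) ^+ 2 = enorm u ^+ 2 + 2 * dotp u v + enorm v ^+ 2.
Proof. rewrite !enorm_sq dotpDl !dotpDr (dotpC v u); lra. Qed.
Lemma normB2 u v : enorm (u - v) ^+ 2 = enorm u ^+ 2 - 2 * dotp u v + enorm v ^+ 2.
Proof. by rewrite normD2 dotpNr enormN; lra. Qed.
Lemma polar u v : 2 * dotp u v <= enorm u ^+ 2 + enorm v ^+ 2.
Proof. have := sqr_ge0 (enorm (u - v)); rewrite normB2; lra. Qed.

Lemma le_eps (x y c : R) : 0 <= c -> (forall t, 0 < t < 1 -> x <= y + t * c) -> x <= y.
Proof.
move=> c0 H; apply/ler_addgt0Pr => e e0.
pose t := Num.min (2^-1) (e / (c + 1)).
have t0 : 0 < t by rewrite lt_min invr_gt0 ltr0n divr_gt0 // ltr_wpDl.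
have t1 : t < 1 by rewrite gt_min; apply/orP; left; rewrite invf_lt1 ?ltr0n // ltr1n.
apply: (le_trans (H t _)); first by rewrite t0 t1.
rewrite lerD2l.
have : t <= e / (c + 1) by rewrite ge_min lexx orbT.
rewrite ler_pdivlMr ?ltr_wpDl // => h.
nra.
Qed.

Lemma CS u v : dotp u v <= enorm u * enorm v.
Proof.
apply/ler_addgt0Pr => e e0.
pose t := Num.min 1 (e / (enorm u + enorm v + 1)).
have t0 : 0 < t by rewrite lt_min ltr01 divr_gt0 // ltr_wpDl // addr_ge0 // enorm_ge0.
have t1 : t <= 1 by rewrite ge_min lexx.
have te : t * (enorm u + enorm v + 1) <= e.
  have : t <= e / (enorm u + enorm v + 1) by rewrite ge_min lexx orbT.
  by rewrite ler_pdivlMr // ltr_wpDl // addr_ge0 // enorm_ge0.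
set a := enorm u + t; set b := enorm v + t.
have a0 : 0 < a by rewrite ltr_wpDl // enorm_ge0.
have b0 : 0 < b by rewrite ltr_wpDl // enorm_ge0.
have h := sqr_ge0 (enorm (b *: u - a *: v)).
rewrite normB2 !enormZ dotpZl dotpZr !ger0_norm in h; try exact: ltW.
have hu : enorm u ^+ 2 <= a ^+ 2 by rewrite ler_sqr ?nnegrE ?enorm_ge0 ?(ltW a0) // /a lerDl ltW.
have hv : enorm v ^+ 2 <= b ^+ 2 by rewrite ler_sqr ?nnegrE ?enorm_ge0 ?(ltW b0) // /b lerDl ltW.
have hab : dotp u v <= a * b.
  have ab0 : 0 < a * b by rewrite mulr_gt0.
  have : 2 * (a * b) * dotp u v <= 2 * (a * b) * (a * b).
    have h1 : (b * enorm u) ^+ 2 <= (a*b)^+2 by rewrite !exprMn mulrC ler_wpM2r // sqr_ge0.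
    have h2 : (a * enorm v) ^+ 2 <= (a*b)^+2 by rewrite !exprMn ler_wpM2l // sqr_ge0.
    rewrite -[X in _ <= X]mulrA -expr2. nra.
  by rewrite ler_pM2l // mulr_gt0.
apply: (le_trans hab); rewrite /a /b.
have := enorm_ge0 u; have := enorm_ge0 v; nra.
Qed.

Lemma CSabs u v : `|dotp u v| <= enorm u * enorm v.
Proof.
rewrite ler_norml CS andbT.
have := CS (- u) v; rewrite dotpNl enormN; lra.
Qed.

Lemma polar_s u v s : 0 < s -> 2 * dotp u v <= s * enorm u ^+ 2 + enorm v ^+ 2 / s.
Proof.
move=> s0; have := polar (s *: u) v.
rewrite dotpZl enormZ ger0_norm ?(ltW s0) // => h.
rewrite -(ler_pM2l s0).
have -> : s * (s * enorm u ^+ 2 + enorm v ^+ 2 / s) = (s * enorm u) ^+2 + enorm v ^+ 2.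
  by field; exact: lt0r_neq0.
lra.
Qed.

Lemma coord_bound u i : `|u ord0 i| <= enorm u ^+ 2 + 1.
Proof.
rewrite enorm_sq /dotp (bigD1 i) //=.
have h0 : 0 <= \sum_(j < d | j != i) u ord0 j * u ord0 j by apply: sumr_ge0 => j _; rewrite -expr2 sqr_ge0.
have : `|u ord0 i| <= u ord0 i * u ord0 i + 1.
  case: (lerP `|u ord0 i| 1) => h; first by rewrite -expr2 ler_wpDl ?sqr_ge0.
  rewrite -expr2 -real_normK ?num_real // ler_wpDr //.
  by rewrite expr2 ler_peMl // ltW.
lra.
Qed.

Lemma enorm_sq_coord u (B : R) : (forall i, `|u ord0 i| <= B) -> enorm u ^+ 2 <= d%:R * B ^+ 2.
Proof.
move=> hb; rewrite enorm_sq /dotp.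
have -> : d%:R * B ^+ 2 = \sum_(i < d) B ^+ 2 by rewrite sumr_const card_ord mulr_natl.
apply: ler_sum => i _; rewrite -expr2 -real_normK ?num_real //.
by rewrite ler_sqr ?nnegrE // (le_trans _ (hb i)).
Qed.

End Dot.


Section BW.
Variables (R : realType) (d : nat).
Local Notation V := 'rV[R]_d.

Lemma ball_coord (p v : V) e : ball p e v -> forall i, `|p ord0 i - v ord0 i| < e.
Proof. by case=> _ /(_ ord0) h i; have := h i. Qed.

Lemma BW (u : nat -> V) (B : R) : (forall n, enorm (u n) ^+ 2 <= B) ->
  exists p : V, forall δ, 0 < δ -> forall N, exists2 n, (N <= n)%N & enorm (u n - p) < δ.
Proof.
move=> hB.
pose M := B + 1.
pose A := [set v : V | forall i, (`[(- M), M]%classic : set R) (v ord0 i)].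
have cA : compact A.
  rewrite /A.
  apply: (@rV_compact _  _ (fun=> `[(- M), M]%classic)).
  by move=> _; apply: segment_compact.
have FA : (u @ \oo) A.
  exists 0%N => // n _ i /=; rewrite /= in_itv /= -ler_norml.
  apply: (le_trans (coord_bound (u n) i)); rewrite /M lerD2r; exact: hB.
have [p [_ cp]] := cA _ _ FA.
exists p => δ δ0 N.
pose δ' := δ / (d%:R + 1).
have δ'0 : 0 < δ' by rewrite divr_gt0 // ltr_wpDl.
have FN : (u @ \oo) [set v | exists2 n, (N <= n)%N & u n = v].
  by exists N => // n /= hn; exists n.
have [v [[n hn <-] bv]] := cp _ _ FN (nbhsx_ballx p δ' δ'0).
exists n => //.
have hc : forall i, `|(u n - p) ord0 i| <= δ'.
  move=> i; rewrite !mxE distrC; exact: (ltW (ball_coord bv i)).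
have := enorm_sq_coord hc.
have hd : d%:R * δ' ^+ 2 < δ ^+ 2.
  have hd0 : (0 <= d%:R :> R) by [].
  have -> : δ = δ' * (d%:R + 1) by rewrite /δ' divfK // lt0r_neq0 // ltr_wpDl.
  nra.
move=> h.
rewrite -ltr_sqr ?nnegrE ?enorm_ge0 ?(ltW δ0) //.
exact: le_lt_trans h hd.
Qed.
End BW.


Section Calc.
Variables (R : realType) (d : nat).
Local Notation V := 'rV[R]_d.

Lemma le_eq (x y : R) : x = y -> x <= y. Proof. by move=> ->. Qed.

Lemma lt_mul_small (a h δ e : R) : 0 <= a -> 0 <= h -> h < δ -> δ = e / (a + 1) -> 0 < e ->
  a * h < e.
Proof.
move=> a0 h0 hd hde e0; rewrite hde in hd.
have a1 : 0 < a + 1 by rewrite ltr_wpDl.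
have : (a + 1) * h < e by rewrite mulrC -ltr_pdivlMr.
nra.
Qed.

Lemma grad_core (f : V -> R) gradf x w e : is_gradient f gradf -> 0 < e ->
  exists t, [/\ 0 < t, t < 1 & `|f (x + t *: w) - f x - t * dotp (gradf x) w| <= t * e].
Proof.
move=> hg e0.
set c := enorm w + 1.
have c0 : 0 < c by rewrite ltr_wpDl // enorm_ge0.
have [δ δ0 hδ] := hg x (e / c) (divr_gt0 e0 c0).
pose t := Num.min (2^-1) (δ / (2 * c)).
have t0 : 0 < t by rewrite lt_min invr_gt0 ltr0n divr_gt0 // mulr_gt0.
have t1 : t < 1 by rewrite gt_min; apply/orP; left; rewrite invf_lt1 ?ltr0n // ltr1n.
have tle : t <= δ / (2 * c) by rewrite ge_min lexx orbT.
have htw : enorm (t *: w) < δ.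
  rewrite enormZ (ger0_norm (ltW t0)) //.
  have : t * (2 * c) <= δ by rewrite -ler_pdivlMr // mulr_gt0.
  have : t * enorm w < t * (2 * c) by rewrite ltr_pM2l // /c; have := enorm_ge0 w; lra.
  lra.
exists t; split => //.
have := hδ _ htw; rewrite dotpZr enormZ (ger0_norm (ltW t0)) // => h.
apply: (le_trans h).
have hq : e / c * c = e by rewrite divfK // lt0r_neq0.
have q0 : 0 < e / c by rewrite divr_gt0.
have hw : enorm w <= c by rewrite /c lerDl.
rewrite -[X in _ <= t * X]hq.
have : e / c * t * enorm w <= e / c * t * c by rewrite ler_pM2l // mulr_gt0.
lra.
Qed.

Lemma grad_lb (f : V -> R) gradf x w A : is_gradient f gradf ->
  (forall t, 0 < t < 1 -> t * A <= f (x + t *: w) - f x) -> A <= dotp (gradf x) w.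
Proof.
move=> hg H; apply/ler_addgt0Pr => e e0.
have [t [t0 t1 h]] := grad_core x w hg e0.
have := H t; rewrite t0 t1 => /(_ isT) h3.
move: h; rewrite ler_norml => /andP[_ h2].
have : t * A <= t * (dotp (gradf x) w + e) by lra.
by rewrite ler_pM2l.
Qed.

Lemma grad_ub (f : V -> R) gradf x w A : is_gradient f gradf ->
  (forall t, 0 < t < 1 -> f (x + t *: w) - f x <= t * A) -> dotp (gradf x) w <= A.
Proof.
move=> hg H; apply/ler_addgt0Pr => e e0.
have [t [t0 t1 h]] := grad_core x w hg e0.
have := H t; rewrite t0 t1 => /(_ isT) h3.
move: h; rewrite ler_norml => /andP[h2 _].
have : t * dotp (gradf x) w <= t * (A + e) by lra.
by rewrite ler_pM2l.
Qed.

Lemma vec_eq1 (x y : V) (t : R) : x + t *: (y - x) = t *: y + (1 - t) *: x.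
Proof. by apply/matrixP => i j; rewrite !mxE; ring. Qed.

Lemma grad_ineq (f : V -> R) gradf : is_gradient f gradf -> convex_real f ->
  forall x y, f x + dotp (gradf x) (y - x) <= f y.
Proof.
move=> hg hc x y.
rewrite -lerBrDl.
apply: grad_ub hg _ => t /andP[t0 t1].
rewrite vec_eq1.
have := hc y x t; rewrite t0 t1 => /(_ isT); lra.
Qed.

Lemma descent_w (f : V -> R) gradf L : is_gradient f gradf -> convex_real f ->
  lipschitz_with L gradf -> 0 <= L ->
  forall x w, f (x + w) <= f x + dotp (gradf x) w + L / 2 * enorm w ^+ 2.
Proof.
move=> hg hc hl L0 x w.
have key : forall N : nat, f (x + w) <= f x + dotp (gradf x) w + L / 2 * enorm w ^+ 2
                              + L * enorm w ^+ 2 / (2 * N.+1%:R).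
  move=> N; have [K [hK K0]] : exists K : R, K = N.+1%:R /\ 0 < K by exists N.+1%:R; rewrite ltr0n.
  have [z zdef] : exists z : nat -> V, forall n, z n = x + (n%:R / K) *: w by exists (fun n => x + (n%:R / K) *: w).
  have claim : forall n : nat, f (z n) - f x <= n%:R / K * dotp (gradf x) w
                 + L * enorm w ^+ 2 * (n%:R * (n%:R + 1)) / (2 * K ^+ 2).
    elim=> [|n IH].
      have -> : z 0%N = x by rewrite zdef mul0r scale0r addr0.
      by rewrite subrr !mul0r add0r mulr0 mul0r.
    have hz : z n.+1 - z n = K^-1 *: w.
      by apply/matrixP => i j; rewrite !zdef !mxE -natr1; field; exact: lt0r_neq0.
    have gi := grad_ineq hg hc (z n.+1) (z n).
    have e1 : f (z n.+1) - f (z n) <= dotp (gradf (z n.+1)) w / K.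
      have hz2 : z n - z n.+1 = - (K^-1 *: w) by rewrite -hz opprB.
      rewrite hz2 dotpNr dotpZr in gi; rewrite mulrC; lra.
    have e2 : dotp (gradf (z n.+1) - gradf x) w <= L * ((n.+1%:R / K) * enorm w) * enorm w.
      apply: (le_trans (CS _ _)); apply: ler_wpM2r; first exact: enorm_ge0.
      apply: (le_trans (hl _ _)); apply: ler_wpM2l => //.
      rewrite zdef addrC addKr enormZ ger0_norm //; apply: divr_ge0 => //; exact: ltW.
    rewrite dotpBl in e2.
    have Kn : (n.+1%:R / K) = (n%:R + 1) / K by rewrite -natr1.
    rewrite Kn in e2.
    have e3 : dotp (gradf (z n.+1)) w / K <= dotp (gradf x) w / K + L * ((n%:R + 1) / K * enorm w) * enorm w / K.
      rewrite -mulrDl ler_pM2r ?invr_gt0 //; lra.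
    have : f (z n.+1) - f x <= n%:R / K * dotp (gradf x) w
                 + L * enorm w ^+ 2 * (n%:R * (n%:R + 1)) / (2 * K ^+ 2)
                 + dotp (gradf x) w / K + L * ((n%:R + 1) / K * enorm w) * enorm w / K.
      lra.
    move=> h; apply: (le_trans h); rewrite -natr1.
    apply: le_eq; field; exact: lt0r_neq0.
  have := claim N.+1.
  have -> : z N.+1 = x + w by rewrite zdef -hK divff ?lt0r_neq0 // scale1r.
  move=> h; apply: (le_trans (_ : _ <= f x + (N.+1%:R / K * dotp (gradf x) w + L * enorm w ^+ 2 * (N.+1%:R * (N.+1%:R + 1)) / (2 * K ^+ 2)))); first lra.
  apply: le_eq; rewrite -hK; field; exact: lt0r_neq0.
apply/ler_addgt0Pr => e e0.
have c0 : 0 <= L * enorm w ^+ 2 / (2 * e) by apply: divr_ge0; [apply: mulr_ge0 => //; exact: sqr_ge0 | apply: mulr_ge0 => //; exact: ltW].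
have hN := archi_boundP c0.
move: hN; set N := Num.Def.archi_bound _ => hN.
apply: (le_trans (key N)); rewrite lerD2l.
rewrite ler_pdivrMr ?mulr_gt0 ?ltr0n //.
have hN' : L * enorm w ^+ 2 / (2 * e) < N.+1%:R.
  rewrite -[N.+1%:R]natr1; apply: (lt_le_trans hN); by rewrite lerDl.
rewrite ltr_pdivrMr ?mulr_gt0 // in hN'.
have := sqr_ge0 (enorm w); nra.
Qed.

Lemma descent (f : V -> R) gradf L : is_gradient f gradf -> convex_real f ->
  lipschitz_with L gradf -> 0 <= L ->
  forall x y, f y <= f x + dotp (gradf x) (y - x) + L / 2 * enorm (y - x) ^+ 2.
Proof.
move=> hg hc hl L0 x y.
have := descent_w hg hc hl L0 x (y - x).
by rewrite addrC subrK.
Qed.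

Lemma f_lsc (f : V -> R) gradf : is_gradient f gradf -> forall p e, 0 < e ->
  exists2 δ, 0 < δ & forall y, enorm (y - p) < δ -> f p - e < f y.
Proof.
move=> hg p e e0.
have [δ1 δ10 h1] := hg p 1 ltr01.
set a := enorm (gradf p) + 1.
have a0 : 0 <= a by rewrite addr_ge0 // enorm_ge0.
exists (Num.min δ1 (e / (a + 1))).
  by rewrite lt_min δ10 divr_gt0 // ltr_wpDl.
move=> y; rewrite lt_min => /andP[hy1 hy2].
have hyp : p + (y - p) = y by rewrite addrC subrK.
have := h1 _ hy1; rewrite hyp ler_norml => /andP[h3 _].
have := CSabs (gradf p) (y - p); rewrite ler_norml => /andP[h4 _].
have := lt_mul_small a0 (enorm_ge0 _) hy2 erefl e0.
rewrite /a; lra.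
Qed.

Lemma sq_lsc (x : V) c p e : 0 <= c -> 0 < e ->
  exists2 δ, 0 < δ & forall y, enorm (y - p) < δ -> c * enorm (p - x) ^+ 2 - e < c * enorm (y - x) ^+ 2.
Proof.
move=> c0 e0.
set a := 2 * c * enorm (p - x).
have a0 : 0 <= a by rewrite mulr_ge0 ?mulr_ge0 // enorm_ge0.
exists (e / (a + 1)); first by rewrite divr_gt0 // ltr_wpDl.
move=> y hy.
have := lt_mul_small a0 (enorm_ge0 _) hy erefl e0.
have -> : y - x = (p - x) + (y - p) by apply/matrixP => i j; rewrite !mxE; ring.
rewrite [enorm (p - x + _) ^+ 2]normD2.
have := mulr_ge0 c0 (sqr_ge0 (enorm (y - p))).
have := CSabs (p - x) (y - p); rewrite ler_norml => /andP[h _].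
have := sqr_ge0 (enorm (y - p)).
rewrite /a => ? ?.
have : c * (2 * dotp (p - x) (y - p)) >= c * (- (2 * (enorm (p - x) * enorm (y - p)))).
  apply: ler_wpM2l => //; lra.
nra.
Qed.

End Calc.


Section Prox.
Variables (R : realType) (d : nat).
Local Notation V := 'rV[R]_d.

Lemma ecases (g : V -> \bar R) x : no_minfty g -> g x = +oo%E \/ exists r, g x = r%:E.
Proof.
move=> hm; move: (hm x); case: (g x) => [r| |] _ //; [right; by exists r | by left].
Qed.

Lemma lsc_add (g : V -> \bar R) (φ : V -> R) p : lsc_ext g -> no_minfty g ->
  (forall e, 0 < e -> exists2 δ, 0 < δ & forall z, enorm (z - p) < δ -> φ p - e < φ z) ->
  forall a : R, (a%:E < g p + (φ p)%:E)%E ->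
  exists2 δ, 0 < δ & forall z, enorm (z - p) < δ -> (a%:E < g z + (φ z)%:E)%E.
Proof.
move=> hl hm hφ a ha.
have [b [e [e0 hb hab]]] : exists b e, [/\ 0 < e, (b%:E < g p)%E & a <= b + φ p - e].
  case: (ecases p hm) => [gp|[r gp]]; rewrite gp in ha *.
    by exists (a - φ p + 1), 1; split => //; [rewrite ltry | lra].
  rewrite -EFinD lte_fin in ha.
  exists (r - (r + φ p - a) / 2), ((r + φ p - a) / 2); split.
  - by rewrite divr_gt0 // subr_gt0.
  - rewrite lte_fin; have : 0 < (r + φ p - a) / 2 by rewrite divr_gt0 // subr_gt0.
    lra.
  - lra.
have [δ1 δ10 h1] := hl p b hb.
have [δ2 δ20 h2] := hφ e e0.
exists (Num.min δ1 δ2); first by rewrite lt_min δ10.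
move=> z; rewrite lt_min => /andP[z1 z2].
have := h1 z z1; have := h2 z z2.
case: (ecases z hm) => [->|[s ->]] hz1 hz2; first by rewrite addye // ltry.
rewrite lte_fin in hz2; rewrite -EFinD lte_fin; lra.
Qed.

Lemma clust_lsc (ψ : V -> \bar R) (u : nat -> V) p (m : R) :
  (forall a : R, (a%:E < ψ p)%E -> exists2 δ, 0 < δ & forall z, enorm (z - p) < δ -> (a%:E < ψ z)%E) ->
  (forall δ, 0 < δ -> forall N, exists2 n, (N <= n)%N & enorm (u n - p) < δ) ->
  (forall n, (ψ (u n) <= (m + n.+1%:R^-1)%:E)%E) -> (ψ p <= m%:E)%E.
Proof.
move=> hl hc hu; rewrite leNgt; apply/negP => hlt.
have [a [ma ha]] : exists a, m < a /\ (a%:E < ψ p)%E.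
  move: hlt; case: (ψ p) => [r| |] h //.
    by rewrite lte_fin in h; exists ((m + r) / 2); rewrite lte_fin; split; lra.
  by exists (m + 1); split; [lra | rewrite ltry].
have [δ δ0 hδ] := hl a ha.
have am0 : 0 < a - m by rewrite subr_gt0.
have c0 : 0 <= (a - m)^-1 by rewrite invr_ge0 ltW.
have [N hN] : exists N : nat, (a - m)^-1 < N%:R by exists (Num.Def.archi_bound (a - m)^-1); exact: archi_boundP c0.
have [n hn hun] := hc δ δ0 N.
have := hδ _ hun; have := hu n => h1 h2.
have := lt_le_trans h2 h1; rewrite lte_fin.
have : n.+1%:R^-1 <= N.+1%:R^-1 :> R.
  by rewrite lef_pV2 ?posrE ?ltr0n // ler_nat ltnS.
have : N.+1%:R^-1 < a - m.
  rewrite -[X in _ < X](invrK (a - m)) ltf_pV2 ?posrE ?invr_gt0 ?ltr0n //.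
  apply: (lt_le_trans hN); rewrite ler_nat; exact: leqnSn.
move: (N.+1%:R^-1 : R) (n.+1%:R^-1 : R) => x1 x2; lra.
Qed.

Lemma prox_vi (g : V -> \bar R) γ y p : no_minfty g -> proper_fun g -> convex_ext g ->
  0 < γ -> is_prox g γ y p ->
  exists gp, g p = gp%:E /\ forall v r, g v = r%:E -> gp + dotp (y - p) (v - p) / γ <= r.
Proof.
move=> hm hp hc γ0 hpr.
have [gp gpE] : exists gp, g p = gp%:E.
  have [v0 hv0] := hp.
  case: (ecases v0 hm) => [h|[r0 h0]]; first by rewrite h in hv0.
  case: (ecases p hm) => [h|//].
  have := hpr v0; rewrite h h0 -EFinD.
  by rewrite addye // leNgt ltry.
exists gp; split => // v r gv.
apply: (@le_eps _ _ _ (enorm (v - p) ^+ 2 / (2 * γ))).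
  by rewrite divr_ge0 ?sqr_ge0 // mulr_ge0 // ltW.
move=> t /andP[t0 t1].
have hw := hc v p t; rewrite t0 t1 /= gv gpE in hw.
have {}hw := hw isT; rewrite -!EFinM -EFinD in hw.
case: (ecases (t *: v + (1 - t) *: p) hm) => [h|[gw gw_]].
  by rewrite h leNgt ltry in hw.
rewrite gw_ lee_fin in hw.
have := hpr (t *: v + (1 - t) *: p); rewrite gpE gw_ -!EFinD lee_fin.
have -> : t *: v + (1 - t) *: p - y = (p - y) + t *: (v - p).
  by apply/matrixP => i j; rewrite !mxE; ring.
rewrite [enorm (p - y + _) ^+ 2]normD2 dotpZr enormZ ger0_norm ?(ltW t0) //.
have -> : y - p = - (p - y) by rewrite opprB.
rewrite dotpNl.
move: (dotp (p - y) (v - p)) (enorm (p - y)) (enorm (v - p)) => D N1 N2 h.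
have g2 : 0 < 2 * γ by rewrite mulr_gt0.
have key : t * gp <= t * r + t * D / γ + t * (t * (N2 ^+ 2 / (2 * γ))).
  have e1 : (N1 ^+ 2 + 2 * (t * D) + (t * N2) ^+ 2) / (2 * γ) = N1 ^+ 2 / (2 * γ) + t * D / γ + t * (t * (N2 ^+ 2 / (2 * γ))).
    by field; exact: lt0r_neq0.
  rewrite e1 in h; lra.
have : gp <= r + D / γ + t * (N2 ^+ 2 / (2 * γ)).
  rewrite -(ler_pM2l t0); move: key; rewrite !mulrDr !mulrA; lra.
move=> h2.
have -> : - D / γ = - (D / γ) by rewrite mulNr.
lra.
Qed.

End Prox.


Section ProxEx.
Variables (R : realType) (d : nat).
Local Notation V := 'rV[R]_d.

Lemma argmin_fin (f : V -> R) (g : V -> \bar R) xs : no_minfty g -> proper_fun g ->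
  argmin_set (Fsum f g) xs -> exists gs, g xs = gs%:E.
Proof.
move=> hm [v0 hv0] hxs.
case: (ecases v0 hm) => [h|[r0 h0]]; first by rewrite h in hv0.
case: (ecases xs hm) => [h|//].
have := hxs v0; rewrite /Fsum h h0 -EFinD.
by rewrite addey // leNgt ltry.
Qed.

Lemma prox_exists (f : V -> R) gradf (g : V -> \bar R) γ y :
  no_minfty g -> proper_fun g -> convex_ext g -> lsc_ext g -> is_gradient f gradf ->
  (exists x, argmin_set (Fsum f g) x) -> 0 < γ -> exists p, is_prox g γ y p.
Proof.
move=> hm hp hc hl hg [xs hxs] γ0.
have [gs gsE] := argmin_fin hm hp hxs.
have minor : forall v r, g v = r%:E -> gs - dotp (gradf xs) (v - xs) <= r.
  move=> v r gv.
  suff : gs - r <= dotp (gradf xs) (v - xs) by move=> ?; lra.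
  apply: grad_lb hg _ => t /andP[t0 t1]; rewrite vec_eq1.
  have := hc v xs t; rewrite t0 t1 gv gsE -!EFinM -EFinD => /(_ isT) hw.
  have := hxs (t *: v + (1 - t) *: xs); rewrite /Fsum gsE.
  case: (ecases (t *: v + (1 - t) *: xs) hm) => [h|[gw gw_]].
    by rewrite h leNgt ltry in hw.
  rewrite gw_ -!EFinD lee_fin; rewrite gw_ lee_fin in hw.
  move=> h; lra.
have g2 : 0 < 2 * γ by rewrite mulr_gt0.
have lowb : forall v r, g v = r%:E ->
    gs - dotp (gradf xs) (y - xs) - γ * enorm (gradf xs) ^+ 2 + enorm (v - y) ^+ 2 / (4 * γ)
    <= r + enorm (v - y) ^+ 2 / (2 * γ).
  move=> v r gv.
  have h1 := minor v r gv.
  have e0 : v - xs = (v - y) + (y - xs) by apply/matrixP => i j; rewrite !mxE; ring.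
  rewrite e0 dotpDr in h1.
  have h2 := polar_s (gradf xs) (v - y) g2.
  move: h1 h2; move: (enorm (v - y) ^+ 2) (dotp (gradf xs) (v - y)) => Q D1 h1 h2.
  have e1 : Q / (2 * γ) = Q / (4 * γ) + Q / (4 * γ) by field; exact: lt0r_neq0.
  lra.
pose c0 := gs - dotp (gradf xs) (y - xs) - γ * enorm (gradf xs) ^+ 2.
have [S Sdef] : exists S : set R, S = [set z | exists v r, g v = r%:E /\ z = r + enorm (v - y) ^+ 2 / (2 * γ)].
  by eexists.
have hSl : has_lbound S.
  exists c0 => z; rewrite Sdef => -[v [r [gv ->]]].
  apply: le_trans (lowb v r gv); rewrite /c0 lerDl divr_ge0 ?sqr_ge0 //.
  by rewrite mulr_ge0 // ltW.
have hS : has_inf S.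
  split => //; have [v0 hv0] := hp.
  case: (ecases v0 hm) => [h|[r0 h0]]; first by rewrite h in hv0.
  by exists (r0 + enorm (v0 - y) ^+ 2 / (2 * γ)); rewrite Sdef; exists v0, r0.
have [m mdef] : exists m, m = inf S by eexists.
have hmin : forall n : nat, exists v, (g v + (enorm (v - y) ^+ 2 / (2 * γ))%:E <= (m + n.+1%:R^-1)%:E)%E.
  move=> n.
  have e0 : 0 < n.+1%:R^-1 :> R by rewrite invr_gt0 ltr0n.
  have [z] := inf_adherent e0 hS.
  rewrite -mdef Sdef => -[v [r [gv ->]]] hz.
  by exists v; rewrite gv -EFinD lee_fin ltW.
have [vs hvs] := choice hmin.
have hB : forall n, enorm (vs n - y) ^+ 2 <= 4 * γ * (m + 1 - c0).
  move=> n; have := hvs n.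
  case: (ecases (vs n) hm) => [h|[r hr]].
    by rewrite h addye // leNgt ltry.
  rewrite hr -EFinD lee_fin => h.
  have h1 : n.+1%:R^-1 <= 1 :> R by rewrite invf_le1 ?ltr0n // ler1n.
  have h2 := lowb _ _ hr.
  have g4 : 0 < 4 * γ by rewrite mulr_gt0.
  rewrite mulrC -ler_pdivrMr //.
  move: h1 h2 h; rewrite /c0; move: (n.+1%:R^-1 : R) (enorm (vs n - y) ^+ 2 / (4 * γ)) (enorm (vs n - y) ^+ 2 / (2 * γ)).
  move=> x1 x2 x3 h1 h2 h; lra.
have [p0 hp0] := BW hB.
have [p pdef] : exists p : V, p = y + p0 by eexists.
have hcl : forall δ, 0 < δ -> forall N, exists2 n, (N <= n)%N & enorm (vs n - p) < δ.
  move=> δ δ0 N; have [n hn h] := hp0 δ δ0 N; exists n => //.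
  by rewrite pdef opprD addrA.
have hpm : (g p + (enorm (p - y) ^+ 2 / (2 * γ))%:E <= m%:E)%E.
  apply: (@clust_lsc _ _ (fun z => g z + (enorm (z - y) ^+ 2 / (2 * γ))%:E)%E vs p m) => //.
  apply: lsc_add => // e e0.
  have ci : 0 <= (2 * γ)^-1 by rewrite invr_ge0; exact: ltW.
  have [δ δ0 hδ] := sq_lsc y p ci e0.
  exists δ => // z hz; rewrite ![_ / (2 * γ)]mulrC; exact: hδ.
exists p => v; apply: (le_trans hpm).
case: (ecases v hm) => [h|[r hr]]; first by rewrite h addye // leey.
rewrite hr -EFinD lee_fin mdef.
apply: ge_inf => //; rewrite Sdef; by exists v, r.
Qed.

Lemma prox_spec (f : V -> R) gradf (g : V -> \bar R) γ y :
  no_minfty g -> proper_fun g -> convex_ext g -> lsc_ext g -> is_gradient f gradf ->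
  (exists x, argmin_set (Fsum f g) x) -> 0 < γ -> is_prox g γ y (prox g γ y).
Proof.
move=> hm hp hc hl hg ha γ0.
rewrite /prox; apply: xgetPex; exact: (prox_exists y hm hp hc hl hg ha γ0).
Qed.

End ProxEx.


Section OneStep.
Variables (R : realType) (d : nat).
Local Notation V := 'rV[R]_d.

Lemma mulvi (γ A B C : R) : 0 < γ -> A + B / γ <= C -> γ * A + B <= γ * C.
Proof.
move=> γ0 h; rewrite -(ler_pM2l γ0) in h.
have e : γ * (A + B / γ) = γ * A + B by field; exact: lt0r_neq0.
by rewrite e in h.
Qed.

Lemma one_step (f : V -> R) gradf (g : V -> \bar R) L x H γ ts p T :
  no_minfty g -> proper_fun g -> convex_ext g -> lsc_ext g -> is_gradient f gradf ->
  0 < L -> lipschitz_with L gradf -> convex_real f ->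
  (exists x, argmin_set (Fsum f g) x) ->
  0 < γ -> γ <= 1 / L -> argmin_set (Fsum f g) ts ->
  p = prox g γ (x - γ *: H) -> T = prox g γ (x - γ *: gradf x) ->
  exists gp gs, [/\ g p = gp%:E, g ts = gs%:E, 0 <= f p + gp - (f ts + gs) &
    enorm (p - ts) ^+ 2 <= enorm (x - ts) ^+ 2 - 2 * γ * dotp (T - ts) (H - gradf x)
      + 2 * γ ^+ 2 * enorm (H - gradf x) ^+ 2 - 2 * γ * (f p + gp - (f ts + gs))].
Proof.
move=> hm hp hc hl hg L0 hlip hcf ha γ0 γL hts pE TE.
have hpp : is_prox g γ (x - γ *: H) p by rewrite pE; exact: (prox_spec _ hm hp hc hl hg ha γ0).
have hTT : is_prox g γ (x - γ *: gradf x) T by rewrite TE; exact: (prox_spec _ hm hp hc hl hg ha γ0).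
have [gp [gpE vip]] := prox_vi hm hp hc γ0 hpp.
have [gT [gTE viT]] := prox_vi hm hp hc γ0 hTT.
have [gs gsE] := argmin_fin hm hp hts.
exists gp, gs; split => //.
  have := hts p; rewrite /Fsum gpE gsE -!EFinD lee_fin; lra.
have Fmin : f ts + gs <= f p + gp.
  by have := hts p; rewrite /Fsum gpE gsE -!EFinD lee_fin.
have vi1 := mulvi γ0 (vip ts gs gsE).
have vi2 := mulvi γ0 (vip T gT gTE).
have vi3 := mulvi γ0 (viT p gp gpE).
have DL := descent hg hcf hlip (ltW L0) x p.
have GI := grad_ineq hg hcf x ts.
have γL' : γ * L <= 1 by rewrite -ler_pdivlMr // mul1r -div1r.
have i1 : x - γ *: H - p = (x - ts) - (p - ts) - γ *: gradf x - γ *: (H - gradf x).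
  by apply/matrixP => i j; rewrite !mxE; ring.
have i2 : ts - p = - (p - ts) by rewrite opprB.
have i3 : T - p = (T - ts) - (p - ts) by apply/matrixP => i j; rewrite !mxE; ring.
have i4 : p - T = (p - ts) - (T - ts) by apply/matrixP => i j; rewrite !mxE; ring.
have i5 : x - γ *: gradf x - T = (x - ts) - (T - ts) - γ *: gradf x.
  by apply/matrixP => i j; rewrite !mxE; ring.
have i6 : p - x = (p - ts) - (x - ts) by apply/matrixP => i j; rewrite !mxE; ring.
have i7 : ts - x = - (x - ts) by rewrite opprB.
rewrite i1 i2 in vi1; rewrite i1 i3 in vi2; rewrite i5 i4 in vi3.
rewrite i6 in DL; rewrite i7 in GI.
rewrite normB2 in DL.
have pol := polar (γ *: (H - gradf x)) ((T - ts) - (p - ts)).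
rewrite normB2 enormZ dotpZl in pol.
move: vi1 vi2 vi3 DL GI pol Fmin.
move: (x - ts) (p - ts) (T - ts) (gradf x) (H - gradf x) => a b c gx e.
rewrite !(dotpDl, dotpDr, dotpNl, dotpNr, dotpZl, dotpZr, dotpBl, dotpBr) -!enorm_sq.
rewrite (dotpC c b) (dotpC b a) (dotpC c e) ger0_norm ?(ltW γ0) //.
move=> vi1 vi2 vi3 DL GI pol Fmin.
have g2 : 0 < 2 * γ by rewrite mulr_gt0.
have DLm := ler_wpM2l (ltW g2) DL.
have GIm := ler_wpM2l (ltW g2) GI.
have hN : 0 <= (1 - γ * L) * (enorm b ^+ 2 - 2 * dotp a b + enorm a ^+ 2).
  apply: mulr_ge0; first by lra.
  have := sqr_ge0 (enorm (b - a)); rewrite normB2 dotpC; lra.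
nra.
Qed.

End OneStep.


Section Seq.
Variable R : realType.

Lemma cvg_lin (s1 s2 : nat -> R) (c1 c2 : R) : cvgn s1 -> cvgn s2 -> cvgn (fun n => c1 * s1 n + c2 * s2 n).
Proof.
move=> h1 h2.
have e : (fun n => c1 * s1 n + c2 * s2 n) = (((fun=> c1) \* s1) + ((fun=> c2) \* s2))%R by apply/funext.
rewrite e; exact: is_cvgD (@is_cvgMr _ _ _ _ _ c1 h1) (@is_cvgMr _ _ _ _ _ c2 h2).
Qed.

Lemma cvg_sqrt (a : nat -> R) : cvgn a -> cvgn (fun n => Num.sqrt (a n)).
Proof.
move=> h; apply/cvg_ex; exists (Num.sqrt (limn a)).
exact: (cvg_comp _ _ h (@sqrt_continuous R _)).
Qed.

Lemma cvg_bnd (u : nat -> R) : cvgn u -> exists M, forall n, `|u n| <= M.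
Proof.
move=> /cvg_seq_bounded [M [_ hM]].
exists (`|M| + 1) => n; apply: (hM (`|M| + 1)) => //.
rewrite (le_lt_trans (ler_norm M)) // ltrDl //.
Qed.

Lemma tele (a s : nat -> R) m n : (forall k, a k.+1 <= a k + s k) -> (m <= n)%N ->
  a n <= a m + \sum_(m <= k < n) s k.
Proof.
move=> h mn.
have e := @telescope_sumr _ m n a mn.
have : \sum_(m <= k < n) (a k.+1 - a k) <= \sum_(m <= k < n) s k.
  by apply: ler_sum => k _; have := h k; lra.
rewrite e; lra.
Qed.

Lemma noninc (b : nat -> R) : (forall n, b n.+1 <= b n) -> {homo b : n m / (n <= m)%N >-> m <= n}.
Proof.
move=> h n m /subnK <-; elim: (m - n)%N => [|k IH]; first by rewrite add0n.
by rewrite addSn; exact: le_trans (h _) IH.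
Qed.

Lemma sum_split (s : nat -> R) N n : (N <= n)%N ->
  \sum_(N <= k < n) s k = \sum_(k < n) s k - \sum_(k < N) s k.
Proof.
move=> Nn.
have := @big_cat_nat R 0 +%R N 0 n xpredT s (leq0n N) Nn; rewrite !big_mkord => ->.
by rewrite addrC addKr.
Qed.

End Seq.

Unset Implicit Arguments.

Theorem theorem4 (R : realType) (d : nat)
  (f : 'rV[R]_d -> R) (gradf : 'rV[R]_d -> 'rV[R]_d) (g : 'rV[R]_d -> \bar R)
  (L : R)
  (* (H1) *)
  (hg_nominf : no_minfty g) (hg_proper : proper_fun g)
  (hg_convex : convex_ext g) (hg_lsc : lsc_ext g)
  (hf_grad : is_gradient f gradf) (hL : 0 < L)
  (hf_lip : lipschitz_with L gradf)
  (* (H2) *)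
  (hf_convex : convex_real f)
  (hargmin : exists x, argmin_set (Fsum f g) x)
  (* stepsizes, iterates *)
  (gam : nat -> R) (theta : nat -> 'rV[R]_d) (H : nat -> 'rV[R]_d)
  (hgam_pos : forall n, (1 <= n)%N -> 0 < gam n)
  (hgam_le : forall n, (1 <= n)%N -> gam n <= 1 / L)
  (hgam_noninc : forall n, (1 <= n)%N -> gam n.+1 <= gam n)
  (htheta0 : dom g (theta 0))
  (hrec : forall n, theta n.+1 = prox g (gam n.+1) (theta n - gam n.+1 *: H n.+1)) :
  let eta := fun n => H n.+1 - gradf (theta n) in (* eta n = eta_{n+1} *)
  let T := fun n => Tmap g gradf (gam n.+1) (theta n) in (* T n = T_{gam_{n+1}}(theta_n) *)
  (* (i) *)
  (forall ts, argmin_set (Fsum f g) ts -> forall m n, (m <= n)%N ->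
     enorm (theta n.+1 - ts) ^+ 2 <=
       enorm (theta m - ts) ^+ 2
       - 2 * (\sum_(m <= k < n.+1) gam k.+1 * dotp (T k - ts) (eta k))
       + 2 * (\sum_(m <= k < n.+1) gam k.+1 ^+ 2 * enorm (eta k) ^+ 2))
  /\
  (* (ii) *)
  ((forall ts, argmin_set (Fsum f g) ts ->
      cvgn (fun n => \sum_(k < n) gam k.+1 * dotp (T k - ts) (eta k))) ->
   cvgn (fun n => \sum_(k < n) gam k.+1 ^+ 2 * enorm (eta k) ^+ 2) ->
   (forall ts, argmin_set (Fsum f g) ts -> cvgn (fun n => enorm (theta n - ts)))
   /\
   ((fun n => \sum_(k < n) gam k.+1) @ \oo --> +oo ->
    exists2 tinf, argmin_set (Fsum f g) tinf &
      (fun n => enorm (theta n - tinf)) @ \oo --> 0)).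
Proof.
move=> eta T.
have etaE : forall k, eta k = H k.+1 - gradf (theta k) by [].
have TE : forall k, T k = prox g (gam k.+1) (theta k - gam k.+1 *: gradf (theta k)) by [].
clearbody eta T.
have γpos : forall k, 0 < gam k.+1 by move=> k; exact: hgam_pos.
have γle : forall k, gam k.+1 <= 1 / L by move=> k; exact: hgam_le.
have step : forall ts, argmin_set (Fsum f g) ts -> exists Fs, Fsum f g ts = Fs%:E /\
   forall k, exists gap, [/\ 0 <= gap, Fsum f g (theta k.+1) = (Fs + gap)%:E &
     enorm (theta k.+1 - ts) ^+ 2 <= enorm (theta k - ts) ^+ 2
       + (2 * (gam k.+1 ^+ 2 * enorm (eta k) ^+ 2) - 2 * (gam k.+1 * dotp (T k - ts) (eta k)))
       - 2 * gam k.+1 * gap].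
  move=> ts hts.
  have [gs gsE] := argmin_fin hg_nominf hg_proper hts.
  exists (f ts + gs); split; first by rewrite /Fsum gsE -EFinD.
  move=> k.
  have [gp [gs' [gpE gsE' h0 h1]]] := one_step hg_nominf hg_proper hg_convex hg_lsc hf_grad hL hf_lip hf_convex hargmin (γpos k) (γle k) hts (hrec k) (TE k).
  have egs : gs' = gs by move: gsE'; rewrite gsE => -[].
  rewrite egs in h0 h1.
  exists (f (theta k.+1) + gp - (f ts + gs)); split => //.
    by rewrite /Fsum gpE -EFinD; congr EFin; ring.
  rewrite -etaE in h1; lra.
split.
  move=> ts hts m n mn.
  have [Fs [_ hst]] := step ts hts.
  have hk : forall k, enorm (theta k.+1 - ts) ^+ 2 <= enorm (theta k - ts) ^+ 2
       + (2 * (gam k.+1 ^+ 2 * enorm (eta k) ^+ 2) - 2 * (gam k.+1 * dotp (T k - ts) (eta k))).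
    move=> k; have [gap [g0 _ h]] := hst k.
    have := mulr_ge0 (mulr_ge0 (ler0n R 2) (ltW (γpos k))) g0; lra.
  have := @tele _ (fun k => enorm (theta k - ts) ^+ 2) (fun k => 2 * (gam k.+1 ^+ 2 * enorm (eta k) ^+ 2) - 2 * (gam k.+1 * dotp (T k - ts) (eta k))) m n.+1 hk (leqW mn).
  rewrite big_split /= sumrN -!mulr_sumr; lra.
move=> hU hW.
have hS : forall ts, argmin_set (Fsum f g) ts ->
    cvgn (fun n => \sum_(k < n) (2 * (gam k.+1 ^+ 2 * enorm (eta k) ^+ 2) - 2 * (gam k.+1 * dotp (T k - ts) (eta k)))).
  move=> ts hts.
  have e : (fun n => \sum_(k < n) (2 * (gam k.+1 ^+ 2 * enorm (eta k) ^+ 2) - 2 * (gam k.+1 * dotp (T k - ts) (eta k))))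
    = (fun n => 2 * (\sum_(k < n) gam k.+1 ^+ 2 * enorm (eta k) ^+ 2) + (-2) * (\sum_(k < n) gam k.+1 * dotp (T k - ts) (eta k))).
    by apply/funext => n; rewrite big_split /= sumrN -!mulr_sumr; ring.
  rewrite e; exact: cvg_lin hW (hU ts hts).
have hkstep : forall ts, argmin_set (Fsum f g) ts -> forall k, enorm (theta k.+1 - ts) ^+ 2 <= enorm (theta k - ts) ^+ 2
       + (2 * (gam k.+1 ^+ 2 * enorm (eta k) ^+ 2) - 2 * (gam k.+1 * dotp (T k - ts) (eta k))).
  move=> ts hts k; have [Fs [_ hst]] := step ts hts; have [gap [g0 _ h]] := hst k.
  have := mulr_ge0 (mulr_ge0 (ler0n R 2) (ltW (γpos k))) g0; lra.
have parta : forall ts, argmin_set (Fsum f g) ts -> cvgn (fun n => enorm (theta n - ts)).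
  move=> ts hts.
  have [s sdef] : exists s : nat -> R, forall k, s k = 2 * (gam k.+1 ^+ 2 * enorm (eta k) ^+ 2) - 2 * (gam k.+1 * dotp (T k - ts) (eta k)) by eexists.
  have hcs : cvgn (fun n => \sum_(k < n) s k).
    have -> : (fun n => \sum_(k < n) s k) = (fun n => \sum_(k < n) (2 * (gam k.+1 ^+ 2 * enorm (eta k) ^+ 2) - 2 * (gam k.+1 * dotp (T k - ts) (eta k)))).
      by apply/funext => n; apply: eq_bigr => k _; exact: sdef.
    exact: hS.
  have hk : forall k, enorm (theta k.+1 - ts) ^+ 2 <= enorm (theta k - ts) ^+ 2 + s k.
    by move=> k; rewrite sdef; exact: hkstep.
  have [M hM] := cvg_bnd hcs.
  have hb : {homo (fun n => enorm (theta n - ts) ^+ 2 - \sum_(k < n) s k) : n m / (n <= m)%N >-> m <= n}.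
    apply: noninc => n; rewrite big_ord_recr /=.
    have := hk n; lra.
  have hlb : has_lbound (range (fun n => enorm (theta n - ts) ^+ 2 - \sum_(k < n) s k)).
    exists (- M) => _ [n _ <-].
    have := hM n; have := sqr_ge0 (enorm (theta n - ts)); rewrite ler_norml => ? /andP[? ?]; lra.
  have hbc := nonincreasing_is_cvgn hb hlb.
  have hac : cvgn (fun n => dotp (theta n - ts) (theta n - ts)).
    have -> : (fun n => dotp (theta n - ts) (theta n - ts)) = (fun n => 1 * (enorm (theta n - ts) ^+ 2 - \sum_(k < n) s k) + 1 * (\sum_(k < n) s k)).
      by apply/funext => n; rewrite -enorm_sq; ring.
    exact: cvg_lin hbc hcs.
  exact: cvg_sqrt hac.
split => //.
move=> hG.
have [ts hts] := hargmin.
have [Fs [FsE hst]] := step ts hts.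
have [gapf hgap] := choice hst.
have [s sdef] : exists s : nat -> R, forall k, s k = 2 * (gam k.+1 ^+ 2 * enorm (eta k) ^+ 2) - 2 * (gam k.+1 * dotp (T k - ts) (eta k)) by eexists.
have hcs : cvgn (fun n => \sum_(k < n) s k).
  have -> : (fun n => \sum_(k < n) s k) = (fun n => \sum_(k < n) (2 * (gam k.+1 ^+ 2 * enorm (eta k) ^+ 2) - 2 * (gam k.+1 * dotp (T k - ts) (eta k)))).
    by apply/funext => n; apply: eq_bigr => k _; exact: sdef.
  exact: hS.
have [M hM] := cvg_bnd hcs.
have hk : forall k, enorm (theta k.+1 - ts) ^+ 2 <= enorm (theta k - ts) ^+ 2 + (s k - 2 * gam k.+1 * gapf k).
  by move=> k; have [_ _ h] := hgap k; rewrite sdef; lra.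
have hk' : forall k, enorm (theta k.+1 - ts) ^+ 2 <= enorm (theta k - ts) ^+ 2 + s k.
  move=> k; have [g0 _ _] := hgap k; have := hk k.
  have := mulr_ge0 (mulr_ge0 (ler0n R 2) (ltW (γpos k))) g0; lra.
have abound : forall n, enorm (theta n - ts) ^+ 2 <= enorm (theta 0 - ts) ^+ 2 + M.
  move=> n; have := @tele _ (fun k => enorm (theta k - ts) ^+ 2) s 0 n hk' (leq0n n).
  rewrite big_mkord; have := hM n; rewrite ler_norml => /andP[_ ?]; lra.
have small : forall e, 0 < e -> forall N, exists2 n, (N <= n)%N & gapf n < e.
  move=> e e0 N; case: (pselect (exists2 n, (N <= n)%N & gapf n < e)) => // hno; exfalso.
  have hge : forall n, (N <= n)%N -> e <= gapf n.
    move=> n Nn; rewrite leNgt; apply/negP => hlt; apply: hno; by exists n.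
  have key : forall n, (N <= n)%N ->
      2 * e * (\sum_(k < n) gam k.+1 - \sum_(k < N) gam k.+1) <= enorm (theta N - ts) ^+ 2 + 2 * M.
    move=> n Nn.
    have := @tele _ (fun k => enorm (theta k - ts) ^+ 2) (fun k => s k - 2 * gam k.+1 * gapf k) N n hk Nn.
    rewrite big_split /= sumrN (sum_split s Nn).
    have : \sum_(N <= k < n) (2 * e) * gam k.+1 <= \sum_(N <= k < n) 2 * gam k.+1 * gapf k.
      apply: ler_sum_nat => k /andP[Nk _].
      have := hge k Nk; have := γpos k; nra.
    rewrite -mulr_sumr (sum_split _ Nn).
    have := hM n; have := hM N; have := sqr_ge0 (enorm (theta n - ts)).
    rewrite !ler_norml => ? /andP[? ?] /andP[? ?] ? ?; lra.
  have := (cvgryPge _).1 hG (\sum_(k < N) gam k.+1 + (enorm (theta N - ts) ^+ 2 + 2 * M) / (2 * e) + 1).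
  move=> [N1 _ hN1].
  have := hN1 (maxn N N1) (leq_maxr N N1); have := key (maxn N N1) (leq_maxl N N1).
  move: (\sum_(k < maxn N N1) gam k.+1) => G.
  have e2 : 0 < 2 * e by rewrite mulr_gt0.
  move=> h1 h2.
  have h3 : (enorm (theta N - ts) ^+ 2 + 2 * M) / (2 * e) * (2 * e) = enorm (theta N - ts) ^+ 2 + 2 * M.
    by rewrite divfK // lt0r_neq0.
  move: h1 h2 h3; move: ((enorm (theta N - ts) ^+ 2 + 2 * M) / (2 * e)) => Q h1 h2 h3.
  nra.
have hsub : forall k, exists n, (k <= n)%N /\ gapf n < k.+1%:R^-1.
  move=> k; have e0 : 0 < k.+1%:R^-1 :> R by rewrite invr_gt0 ltr0n.
  by have [n kn hn] := small _ e0 k; exists n.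
have [φ hφ] := choice hsub.
have hB : forall k, enorm (theta (φ k).+1 - ts) ^+ 2 <= enorm (theta 0 - ts) ^+ 2 + M by move=> k; exact: abound.
have [p0 hp0] := BW hB.
have [p pdef] : exists p, p = ts + p0 by eexists.
have hcl : forall δ, 0 < δ -> forall N, exists2 k, (N <= k)%N & enorm (theta (φ k).+1 - p) < δ.
  move=> δ δ0 N; have [k hk1 hk2] := hp0 δ δ0 N; exists k => //.
  by rewrite pdef opprD addrA.
have hψ : ((g p + (f p)%:E) <= Fs%:E)%E.
  apply: (@clust_lsc _ _ (fun z => g z + (f z)%:E)%E (fun k => theta (φ k).+1) p Fs) => //.
    apply: lsc_add => //; exact: f_lsc hf_grad p.
  move=> k; have [_ hF _] := hgap (φ k).
  move: hF; rewrite /Fsum addeC => ->; rewrite lee_fin lerD2l.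
  by have [_ /ltW] := hφ k.
have pmin : argmin_set (Fsum f g) p.
  move=> y; apply: le_trans (hts y).
  by rewrite FsE /Fsum addeC.
exists p => //.
have hc := parta p pmin.
have clth : forall δ, 0 < δ -> forall N, exists2 n, (N <= n)%N & enorm (theta n - p) < δ.
  move=> δ δ0 N; have [k Nk hk0] := hcl δ δ0 N; exists (φ k).+1 => //.
  have [kφ _] := hφ k; apply: leq_trans Nk (leq_trans kφ (leqnSn _)).
have l0 : 0 <= limn (fun n => enorm (theta n - p)).
  by apply: limr_ge => //; apply: nearW => n; exact: enorm_ge0.
have l1 : limn (fun n => enorm (theta n - p)) <= 0.
  rewrite leNgt; apply/negP => lpos.
  have := cvgr_dist_lt _ _ hc _ (divr_gt0 lpos (ltr0n R 2)).
  move=> [N _ hN].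
  have [n Nn hn] := clth _ (divr_gt0 lpos (ltr0n R 2)) N.
  have := hN n Nn; rewrite ltr_norml => /andP[h1 h2].
  move: h1 h2 hn; move: (limn (fun n => enorm (theta n - p))) => l h1 h2 hn; lra.
have l00 : limn (fun n => enorm (theta n - p)) = 0 by apply/eqP; rewrite eq_le l1 l0.
rewrite -l00; exact: hc.
Qed.
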